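(* Consider an $L$-layer LISTA network with initial weights $(W_{10}^l)_{i,j}\sim\mathcal N(0,1)$, $(W_{20}^l)_{i,j}\sim\mathcal N(0,1)$ i.i.d., $l\in[L]$, and suppose $\|W_{20}^l\|\le c_{20}\sqrt m$ for all $l$ with $c_{20}=3$. Then for any $\mathbf W_1,\mathbf W_2$ with $\|\mathbf W_1-\mathbf W_{10}\|\le R_1$ and $\|\mathbf W_2-\mathbf W_{20}\|\le R_2$ and any $s\in[m]$, $$\|\mathbf b_s^l\|\le L_\sigma^{L-l}\big(c_{20}+R_2/\sqrt m\big)^{L-l},\quad l\in[L].$$ In particular, at initialization ($R_2=0$), $\|\mathbf b^l_{s,0}\|\le L_\sigma^{L-l}c_{20}^{L-l}$.
   Context: Fix $\lambda>0$ and $\sigma(x)=\log(1+e^{x-\lambda})-\log(1+e^{-x-\lambda})$ (componentwise), with $|\sigma'|\le L_\sigma$. LISTA: input $\mathbf y\in\mathbb R^n$, initial $\mathbf x^0\in\mathbb R^m$, $\mathbf x^l=\sigma\big(\frac1{\sqrt n}W_1^l\mathbf y+\frac1{\sqrt m}W_2^l\mathbf x^{l-1}\big)$ with $W_1^l\in\mathbb R^{m\times n}$, $W_2^l\in\mathbb R^{m\times m}$, output $\mathbf f=\frac1{\sqrt m}\mathbf x^L$, $f_s$ its $s$-th entry. $\mathbf b_s^l=\partial f_s/\partial\mathbf x^l\in\mathbb R^m$, and $\mathbf b^l_{s,0}$ is $\mathbf b_s^l$ evaluated at the initial weights. $\mathbf W_1=(W_1^l)_l$, $\mathbf W_2=(W_2^l)_l$;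 the distance $\|\mathbf W_1-\mathbf W_{10}\|$ is the Frobenius norm over all entries. $\|\cdot\|$ is the Euclidean norm for vectors and the spectral norm for matrices. *)

(* Defs.v *)
From HB Require Import structures.
From mathcomp Require Import all_boot all_order all_algebra.
From mathcomp Require Import all_classical all_reals all_analysis.
Set Implicit Arguments. Unset Strict Implicit. Unset Printing Implicit Defensive.
Import Order.TTheory GRing.Theory Num.Theory.
Import numFieldNormedType.Exports.
Local Open Scope classical_set_scope.
Local Open Scope ring_scope.

Section LISTA.
Variable R : realType.

Definition sigma (lam : R) (x : R) : R :=
  ln (1 + expR (x - lam)) - ln (1 + expR (- x - lam)).

Definition enorm (k : nat) (v : 'cV[R]_k) : R :=
  Num.sqrt (\sum_(i < k) v i ord0 ^+ 2).

Definition spec_norm (p q : nat) (A : 'M[R]_(p, q)) : R :=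
  sup [set enorm (A *m v) | v in [set v : 'cV[R]_q | enorm v <= 1]].

Definition frob_dist (p q : nat) (L : nat) (A B : nat -> 'M[R]_(p, q)) : R :=
  Num.sqrt (\sum_(1 <= l < L.+1) \sum_(i < p) \sum_(j < q) (A l i j - B l i j) ^+ 2).

Definition layer (lam : R) (n m : nat) (W1 : nat -> 'M[R]_(m, n))
  (W2 : nat -> 'M[R]_(m, m)) (y : 'cV[R]_n) (l : nat) (u : 'cV[R]_m) : 'cV[R]_m :=
  map_mx (sigma lam)
    ((Num.sqrt n%:R)^-1 *: (W1 l *m y) + (Num.sqrt m%:R)^-1 *: (W2 l *m u)).

(* Apply layers l+1, ..., l+k starting from u (u plays the role of x^l) *)
Fixpoint fwd (lam : R) (n m : nat) (W1 : nat -> 'M[R]_(m, n))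
  (W2 : nat -> 'M[R]_(m, m)) (y : 'cV[R]_n) (l k : nat) (u : 'cV[R]_m)
  : 'cV[R]_m :=
  match k with
  | 0 => u
  | k'.+1 => layer lam W1 W2 y (l + k'.+1) (fwd lam W1 W2 y l k' u)
  end.

Definition xl (lam : R) (n m : nat) (W1 : nat -> 'M[R]_(m, n))
  (W2 : nat -> 'M[R]_(m, m)) (y : 'cV[R]_n) (x0 : 'cV[R]_m) (l : nat) : 'cV[R]_m :=
  fwd lam W1 W2 y 0 l x0.

(* f_s as a function of x^l:  (1/sqrt m) (x^L)_s *)
Definition f_of_xl (lam : R) (n m L : nat) (W1 : nat -> 'M[R]_(m, n))
  (W2 : nat -> 'M[R]_(m, m)) (y : 'cV[R]_n) (s : 'I_m) (l : nat)
  (u : 'cV[R]_m) : R :=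
  (Num.sqrt m%:R)^-1 * fwd lam W1 W2 y l (L - l) u s ord0.

(* b_s^l = partial f_s / partial x^l, evaluated at the actual x^l *)
Definition bvec (lam : R) (n m L : nat) (W1 : nat -> 'M[R]_(m, n))
  (W2 : nat -> 'M[R]_(m, m)) (y : 'cV[R]_n) (x0 : 'cV[R]_m) (s : 'I_m) (l : nat)
  : 'cV[R]_m :=
  \col_(i < m) 'D_(delta_mx i ord0 : 'cV[R]_m)
                 (f_of_xl lam L W1 W2 y s l) (xl lam W1 W2 y x0 l).

End LISTA.

(* Main.v *)
Require Import Defs.
From HB Require Import structures.
From mathcomp Require Import all_boot all_order all_algebra.
From mathcomp Require Import all_classical all_reals all_analysis.
From mathcomp Require Import ring lra.
Set Implicit Arguments. Unset Strict Implicit. Unset Printing Implicit Defensive.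
Import Order.TTheory GRing.Theory Num.Theory.
Import numFieldNormedType.Exports.
Local Open Scope classical_set_scope.
Local Open Scope ring_scope.



Section Norms.
Variable R : realType.

Definition ss (k : nat) (f : 'I_k -> R) : R := \sum_(i < k) f i ^+ 2.

Lemma ss_ge0 k (f : 'I_k -> R) : 0 <= ss f.
Proof. by apply: sumr_ge0 => i _; rewrite sqr_ge0. Qed.

Lemma CS k (f g : 'I_k -> R) : (\sum_(i < k) f i * g i) ^+ 2 <= ss f * ss g.
Proof.
have E : \sum_(i < k) \sum_(j < k) (f i ^+ 2 * g j ^+ 2 + f j ^+ 2 * g i ^+ 2)
  = \sum_(i < k) \sum_(j < k) ((f i * g j - f j * g i) ^+ 2
        + 2 * ((f i * g i) * (f j * g j))).
  by apply: eq_bigr => i _; apply: eq_bigr => j _; ring.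
have A : \sum_(i < k) \sum_(j < k) (f i ^+ 2 * g j ^+ 2 + f j ^+ 2 * g i ^+ 2)
   = 2 * (ss f * ss g).
  rewrite /ss; under eq_bigr do rewrite big_split /=.
  rewrite big_split /= [X in _ + X]exchange_big /=.
  rewrite -!big_distrlr /= [X in _ + X]mulrC; ring.
have B : \sum_(i < k) \sum_(j < k) ((f i * g j - f j * g i) ^+ 2
        + 2 * ((f i * g i) * (f j * g j)))
   = \sum_(i < k) \sum_(j < k) (f i * g j - f j * g i) ^+ 2
     + 2 * (\sum_(i < k) f i * g i) ^+ 2.
  under eq_bigr do rewrite big_split /=.
  rewrite big_split /= expr2 big_distrlr /= mulr_sumr; congr (_ + _).
  by apply: eq_bigr => i _; rewrite mulr_sumr; apply: eq_bigr => j _.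
have P : 0 <= \sum_(i < k) \sum_(j < k) (f i * g j - f j * g i) ^+ 2.
  by apply: sumr_ge0 => i _; apply: sumr_ge0 => j _; rewrite sqr_ge0.
move: E; rewrite A B => E.
lra.
Qed.

Lemma sqrt_le_of (x y : R) : 0 <= y -> x <= y ^+ 2 -> Num.sqrt x <= y.
Proof.
move=> y0 h; rewrite -(ger0_norm y0) -sqrtr_sqr ler_sqrt //; exact: sqr_ge0.
Qed.

Lemma dot_le k (f g : 'I_k -> R) :
  \sum_(i < k) f i * g i <= Num.sqrt (ss f) * Num.sqrt (ss g).
Proof.
apply: (le_trans (ler_norm _)).
rewrite -sqrtr_sqr -sqrtrM ?ss_ge0 // ler_sqrt; last by apply: mulr_ge0; apply: ss_ge0.
exact: CS.
Qed.

Lemma ss_tri k (f g : 'I_k -> R) :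
  Num.sqrt (ss (fun i => f i + g i)) <= Num.sqrt (ss f) + Num.sqrt (ss g).
Proof.
apply: sqrt_le_of; first by rewrite addr_ge0 ?sqrtr_ge0.
have -> : ss (fun i => f i + g i) = ss f + 2 * \sum_(i < k) f i * g i + ss g.
  rewrite /ss mulr_sumr -!big_split /=; apply: eq_bigr => i _; ring.
have := dot_le f g.
have := sqr_sqrtr (ss_ge0 f); have := sqr_sqrtr (ss_ge0 g).
set a := Num.sqrt (ss f); set b := Num.sqrt (ss g).
move=> hb ha hd; rewrite -ha -hb.
nra.
Qed.

End Norms.



Section Mx.
Variable R : realType.

Definition rn (k : nat) (w : 'rV[R]_k) : R := Num.sqrt (ss (fun j => w ord0 j)).
Definition frob (p q : nat) (A : 'M[R]_(p, q)) : R :=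
  Num.sqrt (\sum_(i < p) \sum_(j < q) A i j ^+ 2).

Lemma enormE k (v : 'cV[R]_k) : enorm v = Num.sqrt (ss (fun i => v i ord0)).
Proof. by []. Qed.

Lemma frob_ge0 p q (A : 'M[R]_(p, q)) : 0 <= frob A.
Proof. exact: sqrtr_ge0. Qed.

Lemma enorm_frob p q (A : 'M[R]_(p, q)) v : enorm (A *m v) <= frob A * enorm v.
Proof.
rewrite enormE /frob -sqrtrM; last by apply: sumr_ge0 => i _; apply: sumr_ge0 => j _; apply: sqr_ge0.
rewrite ler_sqrt; last by apply: mulr_ge0; [apply: sumr_ge0 => i _; apply: sumr_ge0 => j _; apply: sqr_ge0| apply: ss_ge0].
rewrite /ss mulr_suml; apply: ler_sum => i _; rewrite mxE.
exact: (CS (fun j => A i j) (fun j => v j ord0)).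
Qed.

Lemma rn_frob p q (A : 'M[R]_(p, q)) w : rn (w *m A) <= frob A * rn w.
Proof.
rewrite /rn /frob -sqrtrM; last by apply: sumr_ge0 => i _; apply: sumr_ge0 => j _; apply: sqr_ge0.
rewrite ler_sqrt; last by apply: mulr_ge0; [apply: sumr_ge0 => i _; apply: sumr_ge0 => j _; apply: sqr_ge0| apply: ss_ge0].
rewrite exchange_big /ss mulr_suml; apply: ler_sum => j _; rewrite mxE /=.
have h := CS (fun i => A i j) (fun i => w ord0 i).
rewrite (eq_bigr (fun i => A i j * w ord0 i)); last by move=> i _; rewrite mulrC.
exact: h.
Qed.

Lemma enormZ k (c : R) (v : 'cV[R]_k) : enorm (c *: v) = `|c| * enorm v.
Proof.
rewrite !enormE -sqrtr_sqr -sqrtrM ?sqr_ge0 //; congr Num.sqrt.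
by rewrite /ss mulr_sumr; apply: eq_bigr => i _; rewrite mxE exprMn.
Qed.

Lemma enorm_ge0 k (v : 'cV[R]_k) : 0 <= enorm v.
Proof. exact: sqrtr_ge0. Qed.

Lemma enorm_spec p q (A : 'M[R]_(p, q)) z : enorm (A *m z) <= spec_norm A * enorm z.
Proof.
set S := [set enorm (A *m v) | v in [set v : 'cV[R]_q | enorm v <= 1]].
have ub : has_ubound S.
  exists (frob A) => x [v /= hv <-].
  apply: (le_trans (enorm_frob A v)).
  by rewrite -[leRHS]mulr1 ler_wpM2l // frob_ge0.
have hS : forall v, enorm v <= 1 -> enorm (A *m v) <= spec_norm A.
  by move=> v hv; apply: (ub_le_sup ub); exists v.
have [e0|epos] := eqVneq (enorm z) 0.
  rewrite e0 mulr0; apply: le_trans (enorm_frob A z) _; by rewrite e0 mulr0.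
have ep : 0 < enorm z by rewrite lt_def epos enorm_ge0.
have := hS ((enorm z)^-1 *: z).
rewrite enormZ ger0_norm ?invr_ge0 ?enorm_ge0 // mulVf // lexx => /(_ isT).
rewrite -scalemxAr enormZ ger0_norm ?invr_ge0 ?enorm_ge0 //.
by rewrite mulrC ler_pdivrMr //.
Qed.

Lemma spec_ge0 p q (A : 'M[R]_(p, q)) : 0 <= spec_norm A.
Proof.
set S := [set enorm (A *m v) | v in [set v : 'cV[R]_q | enorm v <= 1]].
have ub : has_ubound S.
  exists (frob A) => x [v /= hv <-].
  apply: (le_trans (enorm_frob A v)).
  by rewrite -[leRHS]mulr1 ler_wpM2l // frob_ge0.
have h0 : enorm (0 : 'cV[R]_q) = 0.
  by rewrite enormE /ss big1 ?sqrtr0 // => i _; rewrite mxE expr0n.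
apply: le_trans (ub_le_sup ub _); last first.
  exists 0; first by rewrite /= h0 ler01.
  reflexivity.
  exact: enorm_ge0.
Qed.

Lemma rn_spec p q (A : 'M[R]_(p, q)) (B : R) w :
  spec_norm A <= B -> rn (w *m A) <= B * rn w.
Proof.
move=> hB.
set z : 'cV[R]_q := (w *m A)^T.
have ez : rn (w *m A) = enorm z.
  by rewrite /rn enormE; apply: congr1; rewrite /ss; apply: eq_bigr => j _; rewrite /z !mxE.
have key : enorm z ^+ 2 <= rn w * (B * enorm z).
  rewrite {1}enormE sqr_sqrtr ?ss_ge0 //.
  have -> : ss (fun i => z i ord0) = \sum_(i < p) w ord0 i * (A *m z) i ord0.
    have zE : forall j, z j ord0 = \sum_(i < p) w ord0 i * A i j.
      by move=> j; rewrite /z !mxE.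
    rewrite /ss (eq_bigr (fun j => \sum_(i < p) z j ord0 * (w ord0 i * A i j))); last first.
      by move=> j _; rewrite expr2 {2}zE mulr_sumr.
    rewrite exchange_big /=; apply: eq_bigr => i _; rewrite mxE mulr_sumr.
    by apply: eq_bigr => j _; ring.
  apply: le_trans (dot_le _ _) _.
  rewrite ler_wpM2l ?sqrtr_ge0 //.
  apply: le_trans (enorm_spec A z) _.
  by rewrite ler_wpM2r ?enorm_ge0.
rewrite ez.
have B0 : 0 <= B := le_trans (spec_ge0 A) hB.
have r0 : 0 <= rn w := sqrtr_ge0 _.
have ez0 := enorm_ge0 z.
have [e0|epos] := eqVneq (enorm z) 0.
  by rewrite e0; apply: mulr_ge0.
have ep : 0 < enorm z by rewrite lt_def epos enorm_ge0.
move: key ep; set e := enorm z; set r := rn w => key ep.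
nra.
Qed.

End Mx.



Section Der.
Variable R : realType.
Variable lam : R.

Lemma lnexp_derivable (s : R) x :
  derivable (fun x => ln (1 + expR (s * x - lam))) x 1.
Proof.
have g : is_derive x 1 (fun x => 1 + expR (s * x - lam)) (expR (s * x - lam) * s).
  have -> : (fun x => 1 + expR (s * x - lam)) = cst 1 + (expR \o (fun x => s * x - lam)).
    by apply/funext.
  have -> : (fun x => s * x - lam) = (s *: id) - cst lam :> (R -> R).
    by apply/funext.
  apply: is_derive_eq.
  by rewrite add0r subr0 [s%:A]mulr1.
have hp : 0 < 1 + expR (s * x - lam) by rewrite addr_gt0 // expR_gt0.
have := @is_derive1_comp _ (@ln R) (fun x => 1 + expR (s * x - lam)) x _ _ (is_derive1_ln hp) g.
by case.
Qed.

Lemma sigma_is_derive (x : R) : is_derive x 1 (sigma lam) (derive1 (sigma lam) x).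
Proof.
have d : derivable (sigma lam) x 1.
  have -> : sigma lam = (fun x => ln (1 + expR (1 * x - lam))) - (fun x => ln (1 + expR ((-1) * x - lam))).
    by apply/funext => t; rewrite /sigma !fctE /= mul1r mulN1r.
  apply: (@derivableB _ R R); exact: lnexp_derivable.
rewrite derive1E; exact: derivableP.
Qed.

End Der.



Lemma sum_apply (T : Type) (M : nmodType) k (F : 'I_k -> T -> M) t :
  (\sum_(j < k) F j) t = \sum_(j < k) F j t.
Proof. by elim/big_rec2: _ => // j a b _ <-. Qed.

Lemma deriveD1 (R : realType) (V : normedModType R) (f : V -> R) x v :
  'D_v f x = 'D_1 (fun h : R => f (h *: v + x)) 0.
Proof.
rewrite /derive /=; f_equal; f_equal; apply/funext => h /=.
by rewrite addr0 scale0r add0r [_%:A]mulr1.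
Qed.

Section Main.
Variable R : realType.
Variables (lam : R) (n m : nat) (W1 : nat -> 'M[R]_(m, n)) (W2 : nat -> 'M[R]_(m, m)).
Variable y : 'cV[R]_n.

Local Notation K := (Num.sqrt (m%:R : R))^-1.

Definition zpre l (v : 'cV[R]_m) : 'cV[R]_m :=
  (Num.sqrt (n%:R : R))^-1 *: (W1 l *m y) + K *: (W2 l *m v).

Definition Amat l v : 'M[R]_m :=
  \matrix_(i, j) (derive1 (sigma lam) (zpre l v i ord0) * (K * W2 l i j)).

Fixpoint Jac l k (v : 'cV[R]_m) : 'M[R]_m :=
  match k with
  | 0 => 1%:M
  | k'.+1 => Amat (l + k'.+1) (fwd lam W1 W2 y l k' v) *m Jac l k' v
  end.

Lemma fwd_deriv l k (u : R -> 'cV[R]_m) (u' : 'cV[R]_m) (t0 : R) :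
  (forall j, is_derive t0 1 (fun t => u t j ord0) (u' j ord0)) ->
  forall i, is_derive t0 1 (fun t => fwd lam W1 W2 y l k (u t) i ord0)
                         ((Jac l k (u t0) *m u') i ord0).
Proof.
move=> hu; elim: k => [|k IH] i /=.
  by rewrite mul1mx; apply: hu.
set p := (l + k.+1)%N.
set v := fun t => fwd lam W1 W2 y l k (u t).
set c := ((Num.sqrt (n%:R : R))^-1 *: (W1 p *m y)) i ord0.
have E : (fun t => layer lam W1 W2 y p (v t) i ord0)
   = sigma lam \o (cst c + K *: \sum_(j < m) (W2 p i j *: (fun t => v t j ord0))).
  apply/funext => t; rewrite /layer /= mxE !fctE.
  rewrite sum_apply; congr (sigma lam _); rewrite /c !mxE; congr (_ + _).
change (is_derive t0 1 (fun t => layer lam W1 W2 y p (v t) i ord0)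
   ((Amat p (v t0) *m Jac l k (u t0) *m u') i ord0)).
have zE : (cst c + K *: \sum_(j < m) (W2 p i j *: (fun t => v t j ord0))) t0
    = zpre p (v t0) i ord0.
  by rewrite /zpre /c !fctE sum_apply !mxE; congr (_ + _); congr (_ * _);
     apply: eq_bigr => j _; rewrite !fctE.
rewrite E; apply: is_derive_eq.
  apply: is_derive1_comp.
  exact: sigma_is_derive.
have sc : forall a b : R, a *: b = a * b by [].
rewrite zE add0r -mulmxA [RHS]mxE !sc mulr_sumr mulr_sumr.
apply: eq_bigr => j _; rewrite [Amat _ _ _ _]mxE !sc; ring.
Qed.


Lemma bvec_entry L x0 s l i :
  bvec lam L W1 W2 y x0 s l i ord0 = K * Jac l (L - l) (xl lam W1 W2 y x0 l) s i.
Proof.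
rewrite /bvec mxE deriveD1.
set x := xl lam W1 W2 y x0 l.
set e : 'cV[R]_m := delta_mx i ord0.
have hu : forall j, is_derive (0 : R) 1 (fun t : R => (t *: e + x) j ord0) (e j ord0).
  move=> j.
  have -> : (fun t : R => (t *: e + x) j ord0) = (e j ord0) *: id + cst (x j ord0) :> (R -> R).
    by apply/funext => t; rewrite !mxE !fctE /= mulrC.
  apply: is_derive_eq.
  by rewrite addr0 [_ *: 1]mulr1.
have hf := fwd_deriv l (L - l) hu s.
have := @is_deriveZ _ R R _ K 0 1 _ hf.
rewrite scale0r add0r -colE mxE => hd.
exact: (@derive_val _ R R _ _ _ _ hd).
Qed.

End Main.



Section Bnd.
Variable R : realType.

Lemma rnZ k (c : R) (w : 'rV[R]_k) : rn (c *: w) = `|c| * rn w.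
Proof.
rewrite /rn -sqrtr_sqr -sqrtrM ?sqr_ge0 //; congr Num.sqrt.
by rewrite /ss mulr_sumr; apply: eq_bigr => i _; rewrite mxE exprMn.
Qed.

Lemma rnD k (a b : 'rV[R]_k) : rn (a + b) <= rn a + rn b.
Proof.
rewrite /rn; apply: le_trans (ss_tri (fun j => a ord0 j) (fun j => b ord0 j)).
by rewrite le_eqVlt; apply/orP; left; apply/eqP; congr Num.sqrt; rewrite /ss;
  apply: eq_bigr => j _; rewrite mxE.
Qed.

Lemma rn_ge0 k (w : 'rV[R]_k) : 0 <= rn w.
Proof. exact: sqrtr_ge0. Qed.

Variables (lam : R) (n m : nat) (W1 : nat -> 'M[R]_(m, n)) (W2 W20 : nat -> 'M[R]_(m, m)).
Variable y : 'cV[R]_n.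
Variables (Ls R2 : R).
Hypothesis hLs : forall x, `|derive1 (sigma lam) x| <= Ls.
Hypothesis m0 : (0 < m)%N.

Local Notation K := (Num.sqrt (m%:R : R))^-1.

Lemma Ls0 : 0 <= Ls.
Proof. exact: le_trans (normr_ge0 _) (hLs 0). Qed.

Lemma sm0 : 0 < Num.sqrt (m%:R : R).
Proof. by rewrite sqrtr_gt0 ltr0n. Qed.

Lemma Amat_bound p v w :
  spec_norm (W20 p) <= 3 * Num.sqrt (m%:R : R) -> frob (W2 p - W20 p) <= R2 ->
  rn (w *m Amat lam W1 W2 y p v) <= Ls * (3 + R2 / Num.sqrt (m%:R : R)) * rn w.
Proof.
move=> hs hf.
set d := fun i => derive1 (sigma lam) (zpre W1 W2 y p v i ord0).
set wd : 'rV[R]_m := \row_i (w ord0 i * d i).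
have E : w *m Amat lam W1 W2 y p v = K *: (wd *m W2 p).
  apply/matrixP => a b; have -> : a = ord0 by rewrite (ord1 a).
  rewrite !mxE mulr_sumr; apply: eq_bigr => i _.
  by rewrite !mxE /d /= !mxE; ring.
have hwd : rn wd <= Ls * rn w.
  apply: sqrt_le_of; first by apply: mulr_ge0; [exact: Ls0 | exact: rn_ge0].
  rewrite exprMn /rn sqr_sqrtr ?ss_ge0 // /ss mulr_sumr; apply: ler_sum => i _.
  rewrite mxE exprMn mulrC ler_wpM2r ?sqr_ge0 //.
  have h1 := hLs (zpre W1 W2 y p v i ord0).
  rewrite -real_normK ?num_real // ler_sqr ?nnegrE //; exact: Ls0.
have hD : rn (wd *m W2 p) <= (3 * Num.sqrt (m%:R : R) + R2) * rn wd.
  have -> : W2 p = W20 p + (W2 p - W20 p) by rewrite addrC subrK.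
  rewrite mulmxDr mulrDl; apply: le_trans (rnD _ _) _.
  apply: lerD; first exact: rn_spec.
  apply: le_trans (rn_frob _ _) _.
  by rewrite ler_wpM2r ?rn_ge0.
rewrite E rnZ ger0_norm ?invr_ge0 ?sqrtr_ge0 //.
have smp := sm0.
have -> : Ls * (3 + R2 / Num.sqrt (m%:R : R)) * rn w
   = K * ((3 * Num.sqrt (m%:R : R) + R2) * (Ls * rn w)).
  by field; rewrite gt_eqF.
rewrite ler_wpM2l ?invr_ge0 ?sqrtr_ge0 //.
apply: le_trans hD _.
rewrite ler_wpM2l //.
have : 0 <= frob (W2 p - W20 p) := frob_ge0 _.
have := sqrtr_ge0 (m%:R : R).
lra.
Qed.


Local Notation c := (3 + R2 / Num.sqrt (m%:R : R)).

Lemma Jac_bound L l k v w :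
  (forall p, (1 <= p <= L)%N ->
     spec_norm (W20 p) <= 3 * Num.sqrt (m%:R : R) /\ frob (W2 p - W20 p) <= R2) ->
  (l + k <= L)%N -> rn (w *m Jac lam W1 W2 y l k v) <= (Ls * c) ^+ k * rn w.
Proof.
move=> hp; elim: k w => [|k IH] w hk /=.
  by rewrite mulmx1 expr0 mul1r.
have hpk : (1 <= l + k.+1 <= L)%N by apply/andP; split => //; rewrite addnS.
have [hs hf] := hp _ hpk.
have R20 : 0 <= R2 := le_trans (frob_ge0 _) hf.
have c0 : 0 <= c by rewrite addr_ge0 // divr_ge0 // sqrtr_ge0.
rewrite mulmxA; apply: le_trans (IH _ _) _.
  by apply: leq_trans hk; rewrite leq_add2l.
rewrite exprSr -mulrA; apply: ler_wpM2l.
  by apply: exprn_ge0; apply: mulr_ge0 => //; exact: Ls0.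
exact: Amat_bound.
Qed.

Lemma bvec_bound L x0 (s : 'I_m) l :
  (forall p, (1 <= p <= L)%N ->
     spec_norm (W20 p) <= 3 * Num.sqrt (m%:R : R) /\ frob (W2 p - W20 p) <= R2) ->
  (1 <= l <= L)%N ->
  enorm (bvec lam L W1 W2 y x0 s l) <= Ls ^+ (L - l) * c ^+ (L - l).
Proof.
move=> hp /andP[hl1 hlL].
set J := Jac lam W1 W2 y l (L - l) (xl lam W1 W2 y x0 l).
have smp := sm0.
have K0 : 0 <= K by rewrite invr_ge0 ltW.
have -> : enorm (bvec lam L W1 W2 y x0 s l) = K * rn (delta_mx 0 s *m J).
  rewrite enormE /rn -rowE -[K in RHS]ger0_norm // -sqrtr_sqr -sqrtrM ?sqr_ge0 //.
  congr Num.sqrt; rewrite /ss mulr_sumr; apply: eq_bigr => i _.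
  by rewrite bvec_entry -/J mxE exprMn.
have rd : rn (delta_mx 0 s : 'rV[R]_m) = 1.
  rewrite /rn /ss (bigD1 s) //= big1 ?addr0 ?mxE ?eqxx ?expr1n ?sqrtr1 //.
  by move=> j hj; rewrite mxE (negbTE hj) andbF expr0n.
have hJ := @Jac_bound L l (L - l) (xl lam W1 W2 y x0 l) (delta_mx 0 s) hp.
rewrite subnKC // leqnn rd mulr1 in hJ.
have hJ' := hJ isT.
rewrite -exprMn.
have K1 : K <= 1.
  have m1 : (1 : R) <= m%:R by rewrite ler1n.
  rewrite invf_le1 //; apply: le_trans (_ : Num.sqrt 1 <= _).
    by rewrite sqrtr1.
  by rewrite ler_sqrt ?ler0n.
have R0 : 0 <= rn (delta_mx 0 s *m J) := rn_ge0 _.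
apply: le_trans (ler_wpM2r R0 K1) _; rewrite mul1r.
exact: hJ'.
Qed.

End Bnd.

Theorem lemma6 (R : realType) (lam : R) (Lsig : R) (n m L : nat)
  (y : 'cV[R]_n) (x0 : 'cV[R]_m)
  (W10 W1 : nat -> 'M[R]_(m, n)) (W20 W2 : nat -> 'M[R]_(m, m)) (R1 R2 : R) :
  0 < lam ->
  (forall x : R, `|derive1 (sigma lam) x| <= Lsig) ->
  (forall l : nat, (1 <= l <= L)%N -> spec_norm (W20 l) <= 3 * Num.sqrt m%:R) ->
  frob_dist L W1 W10 <= R1 ->
  frob_dist L W2 W20 <= R2 ->
  (forall (s : 'I_m) (l : nat), (1 <= l <= L)%N ->
     enorm (bvec lam L W1 W2 y x0 s l)
       <= Lsig ^+ (L - l) * (3 + R2 / Num.sqrt m%:R) ^+ (L - l))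
  /\
  (forall (s : 'I_m) (l : nat), (1 <= l <= L)%N ->
     enorm (bvec lam L W10 W20 y x0 s l)
       <= Lsig ^+ (L - l) * 3 ^+ (L - l)).
Proof.
move=> hlam hLs hspec hf1 hf2.
have fr : forall (A B : nat -> 'M[R]_m) p, (1 <= p <= L)%N ->
    frob (A p - B p) <= frob_dist L A B.
  move=> A B p hp; rewrite /frob /frob_dist ler_sqrt; last first.
    by apply: sumr_ge0 => l _; apply: sumr_ge0 => i _; apply: sumr_ge0 => j _; apply: sqr_ge0.
  rewrite (bigD1_seq p) /=; last by apply: iota_uniq.
    rewrite -[X in X <= _]addr0; apply: lerD.
      by rewrite le_eqVlt; apply/orP; left; apply/eqP; apply: eq_bigr => i _;
        apply: eq_bigr => j _; rewrite !mxE.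
    by apply: sumr_ge0 => l _; apply: sumr_ge0 => i _; apply: sumr_ge0 => j _; apply: sqr_ge0.
  by rewrite mem_index_iota; case/andP: hp => h1 h2; apply/andP; split.
split => s l hl.
  have m0 : (0 < m)%N by case: (m) s => [[]|].
  apply: (@bvec_bound R lam n m W1 W2 W20 y Lsig R2 hLs m0) => // p hp.
  by split; [exact: hspec | exact: le_trans (fr _ _ _ hp) hf2].
have m0 : (0 < m)%N by case: (m) s => [[]|].
have := (@bvec_bound R lam n m W10 W20 W20 y Lsig 0 hLs m0 L x0 s l).
rewrite mul0r addr0; apply => // p hp.
split; first exact: hspec.
rewrite subrr /frob big1 ?sqrtr0 // => i _; rewrite big1 // => j _.
by rewrite mxE expr0n.
Qed.
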